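(* Let $\mathcal{C}$ be a category, let $\otimes:\mathcal{C}\times\mathcal{C}\to\mathcal{C}$ be a functor, and let $\alpha$ be an associativity constraint for $\otimes$ (see context). Let $(P,\theta)$ be an idempotent in $\mathcal{C}$, i.e. $P\in\mathcal{C}$ and $\theta:P\otimes P\to P$ is an isomorphism. Let $C:P\to P$ be the unique automorphism making the diagram $$C\circ\theta\circ(\theta\otimes \mathrm{id}_P)=\theta\circ(\mathrm{id}_P\otimes\theta)\circ\alpha_{P,P,P}$$ hold as maps $(P\otimes P)\otimes P\to P$, i.e. $C=\theta\circ(\mathrm{id}_P\otimes\theta)\circ\alpha_{P,P,P}\circ(\theta\otimes\mathrm{id}_P)^{-1}\circ\theta^{-1}$. Suppose that $$\theta\circ(C\otimes\mathrm{id}_P)=C\circ\theta\quad\text{and}\quad \theta\circ(\mathrm{id}_P\otimes C)=C\circ\theta$$ as maps $P\otimes P\to P$. Then $C=\mathrm{id}_P$, i.e. $\theta$ is compatible with $\alpha$.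
   Context: An associativity constraint for a functor $\otimes:\mathcal{C}\times\mathcal{C}\to\mathcal{C}$ is a natural isomorphism $\alpha_{A,B,C}:(A\otimes B)\otimes C\to A\otimes(B\otimes C)$ (natural in $A,B,C\in\mathcal{C}$) satisfying the pentagon axiom: for all $A,B,C,D$, $(\mathrm{id}_A\otimes\alpha_{B,C,D})\circ\alpha_{A,B\otimes C,D}\circ(\alpha_{A,B,C}\otimes\mathrm{id}_D)=\alpha_{A,B,C\otimes D}\circ\alpha_{A\otimes B,C,D}$ as maps $((A\otimes B)\otimes C)\otimes D\to A\otimes(B\otimes(C\otimes D))$. No unit object or other monoidal structure is assumed. An idempotent structure $\theta$ on $P$ is called compatible with $\alpha$ if the automorphism $C$ defined in the claim is the identity. *)

(* Defs.v *)
Set Implicit Arguments.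
Unset Strict Implicit.

Record Category := {
  Ob :> Type;
  Hom : Ob -> Ob -> Type;
  idm : forall A, Hom A A;
  comp : forall A B C, Hom B C -> Hom A B -> Hom A C;
  comp_id_l : forall A B (f : Hom A B), comp (idm B) f = f;
  comp_id_r : forall A B (f : Hom A B), comp f (idm A) = f;
  comp_assoc : forall A B C D (h : Hom C D) (g : Hom B C) (f : Hom A B),
      comp h (comp g f) = comp (comp h g) f
}.

Arguments Hom {c} _ _.
Arguments idm {c} _.
Arguments comp {c A B C} _ _.

Notation "g \oc f" := (comp g f) (at level 40, left associativity).

Definition is_iso (C : Category) (A B : C) (f : Hom A B) : Prop :=
  exists g : Hom B A, g \oc f = idm A /\ f \oc g = idm B.

Record Bifunctor (C : Category) := {
  tob :> C -> C -> C;
  thom : forall A A' B B', Hom A A' -> Hom B B' -> Hom (tob A B) (tob A' B');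
  thom_id : forall A B, thom (idm A) (idm B) = idm (tob A B);
  thom_comp : forall A A' A'' B B' B''
      (f' : Hom A' A'') (f : Hom A A') (g' : Hom B' B'') (g : Hom B B'),
      thom (f' \oc f) (g' \oc g) = thom f' g' \oc thom f g
}.

Arguments thom {C} b {A A' B B'} _ _.

Record AssocConstraint (C : Category) (T : Bifunctor C) := {
  assoc : forall A B D : C, Hom (T (T A B) D) (T A (T B D));
  assoc_iso : forall A B D, is_iso (assoc A B D);
  assoc_nat : forall A A' B B' D D' (f : Hom A A') (g : Hom B B') (h : Hom D D'),
      assoc A' B' D' \oc thom T (thom T f g) h
      = thom T f (thom T g h) \oc assoc A B D;
  assoc_pentagon : forall A B D E : C,
      thom T (idm A) (assoc B D E) \oc assoc A (T B D) E
        \oc thom T (assoc A B D) (idm E)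
      = assoc A B (T D E) \oc assoc (T A B) D E
}.

Arguments assoc {C T} _ A B D.

(* Main.v *)
Require Import Defs.

Section H.
Context (Cat : Category) (T : Bifunctor Cat).

Lemma thom_l (A A' A'' B : Cat) (f : Hom A' A'') (g : Hom A A') :
  thom T (f \oc g) (idm B) = thom T f (idm B) \oc thom T g (idm B).
Proof. rewrite <- thom_comp, comp_id_l; reflexivity. Qed.

Lemma thom_r (A B B' B'' : Cat) (f : Hom B' B'') (g : Hom B B') :
  thom T (idm A) (f \oc g) = thom T (idm A) f \oc thom T (idm A) g.
Proof. rewrite <- thom_comp, comp_id_l; reflexivity. Qed.

Lemma thom_split (A A' B B' : Cat) (f : Hom A A') (g : Hom B B') :
  thom T f g = thom T (idm A') g \oc thom T f (idm B).
Proof. rewrite <- thom_comp, comp_id_l, comp_id_r; reflexivity. Qed.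

Lemma thom_split' (A A' B B' : Cat) (f : Hom A A') (g : Hom B B') :
  thom T f g = thom T f (idm B') \oc thom T (idm A) g.
Proof. rewrite <- thom_comp, comp_id_l, comp_id_r; reflexivity. Qed.

Lemma iso_comp (A B D : Cat) (f : Hom B D) (g : Hom A B) :
  is_iso f -> is_iso g -> is_iso (f \oc g).
Proof.
  intros [f' [Hf1 Hf2]] [g' [Hg1 Hg2]]. exists (g' \oc f'). split.
  - rewrite <- comp_assoc, (comp_assoc f' f g), Hf1, comp_id_l; exact Hg1.
  - rewrite <- comp_assoc, (comp_assoc g g' f'), Hg2, comp_id_l; exact Hf2.
Qed.

Lemma iso_thom (A A' B B' : Cat) (f : Hom A A') (g : Hom B B') :
  is_iso f -> is_iso g -> is_iso (thom T f g).
Proof.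
  intros [f' [Hf1 Hf2]] [g' [Hg1 Hg2]]. exists (thom T f' g'). split.
  - rewrite <- thom_comp, Hf1, Hg1, thom_id; reflexivity.
  - rewrite <- thom_comp, Hf2, Hg2, thom_id; reflexivity.
Qed.

Lemma cancel_r (A B D : Cat) (m : Hom A B) (f g : Hom B D) :
  is_iso m -> f \oc m = g \oc m -> f = g.
Proof.
  intros [m' [H1 H2]] E.
  rewrite <- (comp_id_r f), <- (comp_id_r g), <- H2, !comp_assoc, E; reflexivity.
Qed.
Lemma push (A B D E : Cat) (X : Hom B D) (e : Hom A B) (c : Hom D D) (Y : Hom A D) (Z : Hom E A) :
  X \oc e = c \oc Y -> X \oc (e \oc Z) = c \oc (Y \oc Z).
Proof. intros H. rewrite comp_assoc, H, comp_assoc; reflexivity. Qed.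

Lemma cancel_l (A B D : Cat) (m : Hom B D) (f g : Hom A B) :
  is_iso m -> m \oc f = m \oc g -> f = g.
Proof.
  intros [m' [H1 H2]] E.
  rewrite <- (comp_id_l f), <- (comp_id_l g), <- H1, <- !comp_assoc, E; reflexivity.
Qed.
End H.

Theorem mainTheorem1 (Cat : Category) (T : Bifunctor Cat)
    (alpha : AssocConstraint T) (P : Cat) (theta : Hom (T P P) P)
    (Htheta : is_iso theta) (C : Hom P P)
    (HC : C \oc theta \oc thom T theta (idm P)
          = theta \oc thom T (idm P) theta \oc assoc alpha P P P)
    (H1 : theta \oc thom T C (idm P) = C \oc theta)
    (H2 : theta \oc thom T (idm P) C = C \oc theta) :
  C = idm P.
Proof.
  set (M := theta \oc thom T theta (idm P)).
  set (N := theta \oc thom T (idm P) theta).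
  assert (HC' : C \oc M = N \oc assoc alpha P P P) by (unfold M, N; rewrite comp_assoc; exact HC).
  assert (E3 : theta \oc thom T N (idm P) \oc thom T (assoc alpha P P P) (idm P)
               = C \oc (theta \oc thom T M (idm P))).
  { rewrite <- comp_assoc, <- thom_l, <- HC', thom_l, comp_assoc, H1.
    rewrite <- comp_assoc; reflexivity. }
  assert (E5 : theta \oc thom T (idm P) N \oc thom T (idm P) (assoc alpha P P P)
               = C \oc (theta \oc thom T (idm P) M)).
  { rewrite <- comp_assoc, <- thom_r, <- HC', thom_r, comp_assoc, H2.
    rewrite <- comp_assoc; reflexivity. }
  assert (E1 : theta \oc thom T theta theta \oc assoc alpha (T P P) P P
               = C \oc (theta \oc thom T M (idm P))).
  { pose proof (assoc_nat alpha theta (idm P) (idm P)) as nat1.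
    rewrite thom_id in nat1.
    rewrite (thom_split _ _ _ _ _ _ theta theta), comp_assoc, <- comp_assoc, <- nat1.
    fold N. rewrite comp_assoc, <- HC', <- comp_assoc. f_equal.
    unfold M. rewrite thom_l, comp_assoc. reflexivity. }
  assert (E2 : theta \oc thom T (idm P) N \oc assoc alpha P P (T P P)
               = C \oc (theta \oc thom T theta theta)).
  { pose proof (assoc_nat alpha (idm P) (idm P) theta) as nat2.
    rewrite thom_id in nat2.
    unfold N at 1. rewrite thom_r, comp_assoc, <- comp_assoc, <- nat2.
    fold N. rewrite comp_assoc, <- HC', <- comp_assoc. f_equal.
    unfold M. rewrite (thom_split' _ _ _ _ _ _ theta theta), comp_assoc. reflexivity. }
  assert (E4 : theta \oc thom T (idm P) M \oc assoc alpha P (T P P) P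
               = C \oc (theta \oc thom T N (idm P))).
  { pose proof (assoc_nat alpha (idm P) theta (idm P)) as nat4.
    unfold M at 1. rewrite thom_r, comp_assoc, <- comp_assoc, <- nat4.
    fold N. rewrite comp_assoc, <- HC', <- comp_assoc. f_equal.
    unfold N. rewrite thom_l, comp_assoc. reflexivity. }
  pose proof (assoc_pentagon alpha P P P P) as pent.
  assert (F1 : theta \oc thom T (idm P) N \oc (thom T (idm P) (assoc alpha P P P)
      \oc (assoc alpha P (T P P) P \oc thom T (assoc alpha P P P) (idm P)))
      = C \oc (C \oc (C \oc (theta \oc thom T M (idm P))))).
  { rewrite (push _ _ _ _ _ _ _ _ _ _ E5). f_equal. rewrite (push _ _ _ _ _ _ _ _ _ _ E4). f_equal. exact E3. }
  assert (F2 : theta \oc thom T (idm P) N \oc (assoc alpha P P (T P P) \oc assoc alpha (T P P) P P)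
      = C \oc (C \oc (theta \oc thom T M (idm P)))).
  { rewrite (push _ _ _ _ _ _ _ _ _ _ E2). f_equal. exact E1. }
  rewrite <- pent, <- (comp_assoc (thom T (idm P) (assoc alpha P P P))), F1 in F2.
  assert (isoM : is_iso M) by (apply iso_comp; [exact Htheta | apply iso_thom; [exact Htheta | exists (idm P); split; apply comp_id_l]]).
  assert (isom4 : is_iso (theta \oc thom T M (idm P))) by (apply iso_comp; [exact Htheta | apply iso_thom; [exact isoM | exists (idm P); split; apply comp_id_l]]).
  assert (isoC : is_iso C).
  { destruct isoM as [Mi [Mi1 Mi2]].
    assert (Ceq : C = N \oc assoc alpha P P P \oc Mi).
    { rewrite <- HC', <- comp_assoc, Mi2, comp_id_r; reflexivity. }
    rewrite Ceq. apply iso_comp; [| exists M; split; assumption].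
    apply iso_comp; [| apply assoc_iso].
    apply iso_comp; [exact Htheta | apply iso_thom; [exists (idm P); split; apply comp_id_l | exact Htheta]]. }
  apply cancel_l in F2; [| exact isoC].
  apply cancel_l in F2; [| exact isoC].
  assert (F3 : C \oc (theta \oc thom T M (idm P)) = idm P \oc (theta \oc thom T M (idm P)))
    by (rewrite comp_id_l; exact F2).
  apply cancel_r in F3; [| exact isom4].
  exact F3.
Qed.
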